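(* In the setting described in the context, for real constants $c_0,c_1,c_2$ consider the covariant derivative $D$ determined by $$D\Xi^a=c_0X^a\varrho\otimes\varrho+c_1(-1)^{\hat a}\,\Xi^a\otimes\varrho+c_2\,\varrho\otimes\Xi^a,\qquad a=1,2,3.$$ Its torsion $\Theta=d-\pi\circ D$ satisfies $\Theta(\Xi^a)=-(c_1+c_2)\,\varrho\wedge\Xi^a$; hence $D$ is torsionless if and only if $c_2=-c_1$, so the torsionless connections of this form are exactly the two-parameter family $$D\Xi^a=c_0X^a\varrho\otimes\varrho+c_1\big((-1)^{\hat a}\Xi^a\otimes\varrho-\varrho\otimes\Xi^a\big),$$ i.e. $D\xi_1=c_0\theta_1\varrho\otimes\varrho+c_1(\xi_1\otimes\varrho-\varrho\otimes\xi_1)$, $D\eta=c_0x\varrho\otimes\varrho-c_1(\eta\otimes\varrho+\varrho\otimes\eta)$, $D\xi_2=c_0\theta_2\varrho\otimes\varrho+c_1(\xi_2\otimes\varrho-\varrho\otimes\xi_2)$.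
   Context: Fix a real (commuting) parameter $h$. $\mathcal A$ is the $\mathbb Z_2$-graded algebra (quantum superspace covariant under the super-Jordanian quantum supergroup $OSp_h(2/1)$) generated by odd $\theta_1,\theta_2$ and even $x$ with relations $[\theta_1,x]=-hx\theta_2$, $\{\theta_1,\theta_2\}=0$, $[\theta_2,x]=0$, $\theta_1^2=-\frac h2(x^2-2\theta_1\theta_2)$, $\theta_2^2=0$. Write $(X^1,X^2,X^3)=(\theta_1,x,\theta_2)$, index parities $\hat1=\hat3=0$, $\hat2=1$, and $\Xi^a=dX^a$, i.e. $\xi_1=d\theta_1$, $\eta=dx$, $\xi_2=d\theta_2$; $\xi_1,\xi_2$ are even and $\eta$ odd (the parity of $\Xi^a$ is $\hat a$). The exterior derivative $d$ is nilpotent and satisfies $d(f\wedge g)=df\wedge g+(-1)^{\hat f}f\wedge dg$. The differential calculus has the relations: $\xi_1\wedge\eta-\eta\wedge\xi_1=h\eta\wedge\xi_2$, $\xi_1\wedge\xi_2-\xi_2\wedge\xi_1=h\xi_2\wedge\xi_2$, $\eta\wedge\xi_2=\xi_2\wedge\eta$, $\eta\wedge\eta=-\frac h2\xi_2\wedge\xi_2$; and $[\theta_1,\xi_1]=h(\theta_1\xi_2+x\eta-\theta_2\xi_1-\frac h2\theta_2\xi_2)$, $\{\theta_1,\eta\}=hx\xi_2$, $[\theta_1,\xi_2]=h\theta_2\xi_2$, $[x,\xi_1]=-h\theta_2\eta$, $[x,\eta]=-h\theta_2\xi_2$, $[x,\xi_2]=0$, $[\theta_2,\xi_1]=-h\theta_2\xi_2$,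 $\{\theta_2,\eta\}=0$, $[\theta_2,\xi_2]=0$. The invariant one-form is $\varrho=\theta_1\xi_2+x\eta-\theta_2\xi_1-\frac h2\theta_2\xi_2$. The map $\pi:\Omega^1\otimes_{\mathcal A}\Omega^1\to\Omega^2$ is $\pi(\alpha\otimes\beta)=\alpha\wedge\beta$. The map $\sigma$ on $\Omega^1\otimes_{\mathcal A}\Omega^1$ is the $\mathcal A$-bilinear map given by $\sigma(\xi_1\otimes\xi_1)=\xi_1\otimes\xi_1-h(\xi_1\otimes\xi_2+\eta\otimes\eta-\xi_2\otimes\xi_1-\frac h2\xi_2\otimes\xi_2)$, $\sigma(\xi_1\otimes\eta)=\eta\otimes\xi_1+h\xi_2\otimes\eta$, $\sigma(\xi_1\otimes\xi_2)=\xi_2\otimes\xi_1+h\xi_2\otimes\xi_2$, $\sigma(\eta\otimes\xi_1)=\xi_1\otimes\eta-h\eta\otimes\xi_2$, $\sigma(\eta\otimes\eta)=-\eta\otimes\eta-h\xi_2\otimes\xi_2$, $\sigma(\eta\otimes\xi_2)=\xi_2\otimes\eta$, $\sigma(\xi_2\otimes\xi_1)=\xi_1\otimes\xi_2-h\xi_2\otimes\xi_2$, $\sigma(\xi_2\otimes\eta)=\eta\otimes\xi_2$, $\sigma(\xi_2\otimes\xi_2)=\xi_2\otimes\xi_2$. A covariant derivative (linear connection) is a linear map $D:\Omega^1\to\Omega^1\otimes_{\mathcal A}\Omega^1$ with $D(f\xi)=df\otimes\xi+(-1)^{\hat f}fD\xi$ and $D(\xi f)=(-1)^{\hat\xi}\sigma(\xi\otimes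 df)+(D\xi)f$ for homogeneous $f\in\mathcal A$, $\xi\in\Omega^1$; it is determined by its values on $\Xi^a$. Its torsion is $\Theta=d-\pi\circ D$. *)

(* Defs.v *)
From HB Require Import structures.
From mathcomp Require Import all_boot all_order all_algebra.
From mathcomp Require Import reals.
Set Implicit Arguments. Unset Strict Implicit. Unset Printing Implicit Defensive.
Import Order.TTheory GRing.Theory Num.Theory.
Local Open Scope ring_scope.

(* Generators of the exterior algebra Omega = A + Omega^1 + Omega^2 + ... :
   theta1, x, theta2 (the algebra A) and xi1 = d theta1, eta = dx,
   xi2 = d theta2 (the one-forms). *)
Inductive gen := Th1 | Xg | Th2 | Xi1 | Eta | Xi2.

Inductive term (R : Type) :=
  | Gen of gen
  | Cst of R
  | Add of term R & term R
  | Mul of term R & term R.   (* algebra product = wedge product / module action *)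
Arguments Gen {R}.

Section Terms.
Variable R : realType.
Definition tzero : term R := Cst 0.
Definition tscale (r : R) (u : term R) : term R := Mul (Cst r) u.
Definition tsub (u v : term R) : term R := Add u (tscale (-1) v).

Definition th1 : term R := Gen Th1.
Definition xx  : term R := Gen Xg.
Definition th2 : term R := Gen Th2.
Definition xi1 : term R := Gen Xi1.
Definition eta : term R := Gen Eta.
Definition xi2 : term R := Gen Xi2.

Definition rho (h : R) : term R :=
  tsub (Add (Mul th1 xi2) (Add (Mul xx eta) (tscale (-1) (Mul th2 xi1))))
       (tscale (h / 2) (Mul th2 xi2)).

Definition relations (h : R) : seq (term R * term R) := [::
  (tsub (Mul th1 xx) (Mul xx th1), tscale (- h) (Mul xx th2));
  (Add (Mul th1 th2) (Mul th2 th1), tzero);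
  (tsub (Mul th2 xx) (Mul xx th2), tzero);
  (Mul th1 th1, tscale (- (h / 2)) (tsub (Mul xx xx) (tscale 2 (Mul th1 th2))));
  (Mul th2 th2, tzero);
  (tsub (Mul xi1 eta) (Mul eta xi1), tscale h (Mul eta xi2));
  (tsub (Mul xi1 xi2) (Mul xi2 xi1), tscale h (Mul xi2 xi2));
  (Mul eta xi2, Mul xi2 eta);
  (Mul eta eta, tscale (- (h / 2)) (Mul xi2 xi2));
  (tsub (Mul th1 xi1) (Mul xi1 th1), tscale h (rho h));
  (Add (Mul th1 eta) (Mul eta th1), tscale h (Mul xx xi2));
  (tsub (Mul th1 xi2) (Mul xi2 th1), tscale h (Mul th2 xi2));
  (tsub (Mul xx xi1) (Mul xi1 xx), tscale (- h) (Mul th2 eta));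
  (tsub (Mul xx eta) (Mul eta xx), tscale (- h) (Mul th2 xi2));
  (tsub (Mul xx xi2) (Mul xi2 xx), tzero);
  (tsub (Mul th2 xi1) (Mul xi1 th2), tscale (- h) (Mul th2 xi2));
  (Add (Mul th2 eta) (Mul eta th2), tzero);
  (tsub (Mul th2 xi2) (Mul xi2 th2), tzero)
].

Fixpoint inrel (p : term R * term R) (s : seq (term R * term R)) : Prop :=
  if s is q :: s' then p = q \/ inrel p s' else False.

(* [eqv h u v]: u = v in Omega, the free unital associative R-algebra on the
   generators modulo the two-sided ideal generated by [relations h]. *)
Inductive eqv (h : R) : term R -> term R -> Prop :=
  | eqv_refl u : eqv h u u
  | eqv_sym u v : eqv h u v -> eqv h v u
  | eqv_trans u v w : eqv h u v -> eqv h v w -> eqv h u w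
  | eqv_add u u' v v' : eqv h u u' -> eqv h v v' -> eqv h (Add u v) (Add u' v')
  | eqv_mul u u' v v' : eqv h u u' -> eqv h v v' -> eqv h (Mul u v) (Mul u' v')
  | eqv_addA u v w : eqv h (Add u (Add v w)) (Add (Add u v) w)
  | eqv_addC u v : eqv h (Add u v) (Add v u)
  | eqv_add0 u : eqv h (Add tzero u) u
  | eqv_addN u : eqv h (Add u (tscale (-1) u)) tzero
  | eqv_mulA u v w : eqv h (Mul u (Mul v w)) (Mul (Mul u v) w)
  | eqv_mul1l u : eqv h (Mul (Cst 1) u) u
  | eqv_mul1r u : eqv h (Mul u (Cst 1)) u
  | eqv_mulDl u v w : eqv h (Mul (Add u v) w) (Add (Mul u w) (Mul v w))
  | eqv_mulDr u v w : eqv h (Mul u (Add v w)) (Add (Mul u v) (Mul u w))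
  | eqv_cstD a b : eqv h (Add (Cst a) (Cst b)) (Cst (a + b))
  | eqv_cstM a b : eqv h (Mul (Cst a) (Cst b)) (Cst (a * b))
  | eqv_cstC a u : eqv h (Mul (Cst a) u) (Mul u (Cst a))
  | eqv_rel l r : inrel (l, r) (relations h) -> eqv h l r.

Inductive idx := I1 | I2 | I3.
Definition X (a : idx) : term R :=
  match a with I1 => th1 | I2 => xx | I3 => th2 end.
Definition Xi (a : idx) : term R :=
  match a with I1 => xi1 | I2 => eta | I3 => xi2 end.
Definition hat (a : idx) : bool := if a is I2 then true else false.
Definition sgn (a : idx) : R := if hat a then -1 else 1.

(* elements of Omega^1 (x)_A Omega^1 represented as formal sums of simple
   tensors alpha (x) beta;  pi (alpha (x) beta) = alpha /\ beta *)
Definition tensor := seq (term R * term R).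
Definition pi (t : tensor) : term R :=
  foldr (fun p acc => Add (Mul p.1 p.2) acc) tzero t.

Definition Dconn (h c0 c1 c2 : R) (a : idx) : tensor :=
  [:: (tscale c0 (Mul (X a) (rho h)), rho h);
      (tscale (c1 * sgn a) (Xi a), rho h);
      (tscale c2 (rho h), Xi a)].

(* d Xi^a = d (d X^a) = 0 by nilpotency of d *)
Definition dXi (a : idx) : term R := tzero.

Definition torsion (h c0 c1 c2 : R) (a : idx) : term R :=
  tsub (dXi a) (pi (Dconn h c0 c1 c2 a)).

(* D is torsionless: Theta vanishes (Theta is left A-linear up to sign,
   Theta(f xi) = (-1)^f f Theta(xi), so it suffices on the basis Xi^a) *)
Definition torsionless (h c0 c1 c2 : R) : Prop :=
  forall a, eqv h (torsion h c0 c1 c2 a) tzero.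
End Terms.
Arguments X {R}.
Arguments Xi {R}.
Arguments sgn {R}.
Arguments dXi {R}.

(* Main.v *)
Require Import Defs.
From HB Require Import structures.
From mathcomp Require Import all_boot all_order all_algebra.
From mathcomp Require Import reals ring.
From Stdlib Require Import Setoid Morphisms.
Set Implicit Arguments. Unset Strict Implicit. Unset Printing Implicit Defensive.
Import GRing.Theory Num.Theory.
Local Open Scope ring_scope.

Section Free.
Variable R : realType.
Variable h : R.
Notation T := (term R).
Notation Z := (tzero R).
Notation "u ~~ v" := (eqv h u v) (at level 70).

#[local] Instance eqv_Equiv : Equivalence (@eqv R h).
Proof. split; [exact: eqv_refl | exact: eqv_sym | exact: eqv_trans]. Qed.
#[local] Instance Add_Proper : Proper (eqv h ==> eqv h ==> eqv h) (@Add R).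
Proof. by move=> ? ? ? ? ? ?; apply: eqv_add. Qed.
#[local] Instance Mul_Proper : Proper (eqv h ==> eqv h ==> eqv h) (@Mul R).
Proof. by move=> ? ? ? ? ? ?; apply: eqv_mul. Qed.

Lemma addZ u : Add u Z ~~ u.
Proof. setoid_rewrite (eqv_addC h u Z). exact: eqv_add0. Qed.

Lemma mul0 u : Mul (Cst 0) u ~~ Z.
Proof.
set z := Mul (Cst 0) u.
have zz : z ~~ Add z z.
  rewrite /z; setoid_rewrite <- eqv_mulDl; setoid_rewrite eqv_cstD; rewrite addr0; reflexivity.
transitivity (Add z (Add z (tscale (-1) z))).
  setoid_rewrite eqv_addN; symmetry; exact: addZ.
setoid_rewrite eqv_addA; setoid_rewrite <- zz; exact: eqv_addN.
Qed.

Lemma tmul0r u : Mul u (Cst 0) ~~ Z.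
Proof. setoid_rewrite <- eqv_cstC; exact: mul0. Qed.
Lemma mulZ u : Mul u Z ~~ Z.
Proof. exact: tmul0r. Qed.
Lemma Zmul u : Mul Z u ~~ Z.
Proof. exact: mul0. Qed.

Lemma subZ u v : tsub u v ~~ Z -> u ~~ v.
Proof.
move=> H.
have NA : Add (tscale (-1) v) v ~~ Z.
  setoid_rewrite eqv_addC; exact: eqv_addN.
transitivity (Add u (Add (tscale (-1) v) v)); first by setoid_rewrite NA; symmetry; exact: addZ.
setoid_rewrite eqv_addA; rewrite /tsub in H; setoid_rewrite H; exact: eqv_add0.
Qed.


Definition mono := (R * seq gen)%type.
Fixpoint wterm (w : seq gen) : T := if w is g :: w' then Mul (Gen g) (wterm w') else Cst 1.
Definition mterm (m : mono) : T := Mul (Cst m.1) (wterm m.2).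
Fixpoint interp (p : seq mono) : T := if p is m :: p' then Add (mterm m) (interp p') else Z.
Definition mulp (p q : seq mono) : seq mono :=
  flatten (map (fun m => map (fun n => (m.1 * n.1, m.2 ++ n.2)) q) p).
Fixpoint norm (u : T) : seq mono :=
  match u with
  | Gen g => [:: (1, [:: g])]
  | Cst r => [:: (r, [::])]
  | Add u v => norm u ++ norm v
  | Mul u v => mulp (norm u) (norm v)
  end.

Lemma interp_cat p q : interp (p ++ q) ~~ Add (interp p) (interp q).
Proof.
elim: p => [|m p IH] /=; first by symmetry; exact: eqv_add0.
setoid_rewrite IH; exact: eqv_addA.
Qed.

Lemma wterm_cat v w : wterm (v ++ w) ~~ Mul (wterm v) (wterm w).
Proof.
elim: v => [|g v IH] /=; first by symmetry; exact: eqv_mul1l.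
setoid_rewrite IH; exact: eqv_mulA.
Qed.

Lemma mterm_mul m n : Mul (mterm m) (mterm n) ~~ mterm (m.1*n.1, m.2++n.2).
Proof.
rewrite /mterm /=.
set c1 := Cst m.1; set c2 := Cst n.1; set W1 := wterm m.2; set W2 := wterm n.2.
transitivity (Mul c1 (Mul W1 (Mul c2 W2))); first by symmetry; exact: eqv_mulA.
transitivity (Mul c1 (Mul (Mul W1 c2) W2)).
  apply: eqv_mul; [reflexivity| exact: eqv_mulA].
transitivity (Mul c1 (Mul (Mul c2 W1) W2)).
  apply: eqv_mul; first reflexivity. apply: eqv_mul; last reflexivity.
  symmetry; exact: eqv_cstC.
transitivity (Mul c1 (Mul c2 (Mul W1 W2))).
  apply: eqv_mul; first reflexivity. symmetry; exact: eqv_mulA.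
transitivity (Mul (Mul c1 c2) (Mul W1 W2)); first exact: eqv_mulA.
apply: eqv_mul; first exact: eqv_cstM.
symmetry; exact: wterm_cat.
Qed.

Lemma interp_map m q :
  interp (map (fun n => (m.1*n.1, m.2++n.2)) q) ~~ Mul (mterm m) (interp q).
Proof.
elim: q => [|n q IH] /=; first by symmetry; exact: mulZ.
setoid_rewrite IH; setoid_rewrite eqv_mulDr; setoid_rewrite mterm_mul; reflexivity.
Qed.

Lemma interp_mulp p q : interp (mulp p q) ~~ Mul (interp p) (interp q).
Proof.
rewrite /mulp; elim: p => [|m p IH] /=; first by symmetry; exact: Zmul.
setoid_rewrite interp_cat; setoid_rewrite IH; setoid_rewrite interp_map.
symmetry; exact: eqv_mulDl.
Qed.

Lemma norm_sound u : u ~~ interp (norm u).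
Proof.
elim: u => [g|r|u IHu v IHv|u IHu v IHv] /=.
- rewrite /mterm /=. setoid_rewrite addZ. setoid_rewrite eqv_mul1l.
  symmetry; exact: eqv_mul1r.
- rewrite /mterm /=. setoid_rewrite addZ. symmetry; exact: eqv_mul1r.
- setoid_rewrite interp_cat; setoid_rewrite <- IHu; setoid_rewrite <- IHv; reflexivity.
- setoid_rewrite interp_mulp; setoid_rewrite <- IHu; setoid_rewrite <- IHv; reflexivity.
Qed.


Definition geq (a b : gen) : bool :=
  match a, b with
  | Th1, Th1 | Xg, Xg | Th2, Th2 | Xi1, Xi1 | Eta, Eta | Xi2, Xi2 => true
  | _, _ => false
  end.
Fixpoint weq (v w : seq gen) : bool :=
  match v, w with
  | [::], [::] => true
  | a :: v', b :: w' => geq a b && weq v' w'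
  | _, _ => false
  end.
Lemma weqP v w : weq v w -> v = w.
Proof.
elim: v w => [|a v IH] [|b w] //= /andP [H1 H2].
by rewrite (IH _ H2); case: a b H1 => [] [].
Qed.

Fixpoint insert (m : mono) (p : seq mono) : seq mono :=
  match p with
  | [::] => [:: m]
  | n :: p' => if weq m.2 n.2 then (m.1 + n.1, n.2) :: p' else n :: insert m p'
  end.
Definition collect (p : seq mono) : seq mono := foldr insert [::] p.
Fixpoint allzero (p : seq mono) : Prop :=
  if p is m :: p' then m.1 = 0 /\ allzero p' else True.

Lemma interp_insert m p : interp (insert m p) ~~ Add (mterm m) (interp p).
Proof.
elim: p => [|n p IH] /=; first reflexivity.
case E: (weq m.2 n.2) => /=.
  move/weqP: E => E.
  transitivity (Add (Add (mterm m) (mterm n)) (interp p)); last by symmetry; exact: eqv_addA.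
  apply: eqv_add; last reflexivity.
  rewrite /mterm /= E.
  transitivity (Mul (Add (Cst m.1) (Cst n.1)) (wterm n.2)); last exact: eqv_mulDl.
  apply: eqv_mul; last reflexivity. symmetry; exact: eqv_cstD.
setoid_rewrite IH.
transitivity (Add (Add (mterm n) (mterm m)) (interp p)); first exact: eqv_addA.
transitivity (Add (Add (mterm m) (mterm n)) (interp p)); last by symmetry; exact: eqv_addA.
apply: eqv_add; [exact: eqv_addC | reflexivity].
Qed.

Lemma interp_collect p : interp (collect p) ~~ interp p.
Proof.
elim: p => [|m p IH] /=; first reflexivity.
setoid_rewrite interp_insert; setoid_rewrite IH; reflexivity.
Qed.

Lemma allzero_sound p : allzero p -> interp p ~~ Z.
Proof.
elim: p => [|m p IH] /=; first by reflexivity.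
case=> H0 /IH H. setoid_rewrite H. setoid_rewrite addZ.
rewrite /mterm H0; exact: mul0.
Qed.

Lemma free_check u v : allzero (collect (norm (tsub u v))) -> u ~~ v.
Proof.
move=> /allzero_sound H; apply: subZ.
setoid_rewrite (norm_sound (tsub u v)). setoid_rewrite <- interp_collect. exact: H.
Qed.

Lemma inrel_nth (d : T * T) s i : (i < size s)%N -> @inrel R (nth d s i) s.
Proof.
elim: s i => [|a s IH] [|i] //=; first by left.
by move=> /IH H; right.
Qed.

Lemma rel_check i k u v : (i < 18)%N ->
  allzero (collect (norm (tsub (tsub u v)
     (tscale k (tsub (nth (Z, Z) (relations h) i).1 (nth (Z, Z) (relations h) i).2))))) ->
  u ~~ v.
Proof.
move=> Hi /free_check H; apply: subZ.
setoid_rewrite H.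
have Hr : (nth (Z, Z) (relations h) i).1 ~~ (nth (Z, Z) (relations h) i).2.
  apply: eqv_rel; rewrite -surjective_pairing; exact: inrel_nth.
rewrite /tscale /tsub. setoid_rewrite Hr. setoid_rewrite eqv_addN. exact: mulZ.
Qed.


Definition rule (a b : gen) : option (seq mono) :=
  match a, b with
  | Th1, Xg => Some [:: (1, [:: Xg; Th1]); (-h, [:: Xg; Th2])]
  | Th2, Xg => Some [:: (1, [:: Xg; Th2])]
  | Th2, Th1 => Some [:: (-1, [:: Th1; Th2])]
  | Th1, Th1 => Some [:: (-(h/2), [:: Xg; Xg]); (h, [:: Th1; Th2])]
  | Th2, Th2 => Some [::]
  | Eta, Xi1 => Some [:: (1, [:: Xi1; Eta]); (-h, [:: Eta; Xi2])]
  | Xi2, Xi1 => Some [:: (1, [:: Xi1; Xi2]); (-h, [:: Xi2; Xi2])]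
  | Xi2, Eta => Some [:: (1, [:: Eta; Xi2])]
  | Eta, Eta => Some [:: (-(h/2), [:: Xi2; Xi2])]
  | Xi1, Th1 => Some [:: (1, [:: Th1; Xi1]); (-h, [:: Th1; Xi2]); (-h, [:: Xg; Eta]);
                        (h, [:: Th2; Xi1]); (h*h/2, [:: Th2; Xi2])]
  | Eta, Th1 => Some [:: (-1, [:: Th1; Eta]); (h, [:: Xg; Xi2])]
  | Xi2, Th1 => Some [:: (1, [:: Th1; Xi2]); (-h, [:: Th2; Xi2])]
  | Xi1, Xg => Some [:: (1, [:: Xg; Xi1]); (h, [:: Th2; Eta])]
  | Eta, Xg => Some [:: (1, [:: Xg; Eta]); (h, [:: Th2; Xi2])]
  | Xi2, Xg => Some [:: (1, [:: Xg; Xi2])]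
  | Xi1, Th2 => Some [:: (1, [:: Th2; Xi1]); (h, [:: Th2; Xi2])]
  | Eta, Th2 => Some [:: (-1, [:: Th2; Eta])]
  | Xi2, Th2 => Some [:: (1, [:: Th2; Xi2])]
  | _, _ => None
  end.

Definition rule_rel (a b : gen) : nat * R :=
  match a, b with
  | Th1, Xg => (0%N, 1)
  | Th2, Xg => (2%N, 1)
  | Th2, Th1 => (1%N, 1)
  | Th1, Th1 => (3%N, 1)
  | Th2, Th2 => (4%N, 1)
  | Eta, Xi1 => (5%N, -1)
  | Xi2, Xi1 => (6%N, -1)
  | Xi2, Eta => (7%N, -1)
  | Eta, Eta => (8%N, 1)
  | Xi1, Th1 => (9%N, -1)
  | Eta, Th1 => (10%N, 1)
  | Xi2, Th1 => (11%N, -1)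
  | Xi1, Xg => (12%N, -1)
  | Eta, Xg => (13%N, -1)
  | Xi2, Xg => (14%N, -1)
  | Xi1, Th2 => (15%N, -1)
  | Eta, Th2 => (16%N, 1)
  | Xi2, Th2 => (17%N, -1)
  | _, _ => (0%N, 0)
  end.

Ltac solve_az :=
  repeat match goal with
         | |- _ /\ _ => split
         | |- True => exact I
         end; field; try done.

Lemma rule_sound a b p : rule a b = Some p -> wterm [:: a; b] ~~ interp p.
Proof.
move=> E; apply: (@rel_check (rule_rel a b).1 (rule_rel a b).2).
  by case: a b E => [] [].
case: a b E => [] [] //= [<-];
cbv [allzero collect insert weq geq norm mulp flatten map cat foldr tsub tscale tzero rho
     th1 xx th2 xi1 Defs.eta xi2 relations nth fst snd rule_rel interp mterm wterm andb]; solve_az.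
Qed.


Fixpoint stepw (w : seq gen) : option (seq mono) :=
  match w with
  | a :: t =>
      match t with
      | b :: t' =>
          match rule a b with
          | Some p => Some (mulp p [:: (1, t')])
          | None => match stepw t with
                    | Some q => Some (mulp [:: (1, [:: a])] q)
                    | None => None
                    end
          end
      | [::] => None
      end
  | [::] => None
  end.

Definition stepm (m : mono) : seq mono :=
  match stepw m.2 with
  | Some q => mulp [:: (m.1, [::])] q
  | None => [:: m]
  end.
Definition stepp (p : seq mono) : seq mono := flatten (map stepm p).
Fixpoint reduce (n : nat) (p : seq mono) : seq mono :=
  if n is n'.+1 then reduce n' (collect (stepp p)) else p.

Lemma interp1 m : interp [:: m] ~~ mterm m.
Proof. exact: addZ. Qed.

Lemma stepw_sound w q : stepw w = Some q -> wterm w ~~ interp q.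
Proof.
elim: w q => [|a t IH] q //=.
case: t IH => [|b t'] IH //.
case E: (rule a b) => [p|].
  move=> [<-]. setoid_rewrite interp_mulp. setoid_rewrite interp1.
  setoid_rewrite <- (rule_sound E). rewrite /mterm /=.
  transitivity (Mul (Mul (Gen a) (Mul (Gen b) (Cst 1))) (wterm t')); last first.
    apply: eqv_mul; first reflexivity. symmetry; exact: eqv_mul1l.
  transitivity (Mul (Gen a) (Mul (Mul (Gen b) (Cst 1)) (wterm t'))); last exact: eqv_mulA.
  apply: eqv_mul; first reflexivity.
  transitivity (Mul (Gen b) (Mul (Cst 1) (wterm t'))); last exact: eqv_mulA.
  apply: eqv_mul; first reflexivity. symmetry; exact: eqv_mul1l.
case E2: (stepw (b :: t')) => [q'|] // [<-].
setoid_rewrite interp_mulp. setoid_rewrite interp1. rewrite /mterm /=.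
setoid_rewrite <- (IH _ E2). apply: eqv_mul; last reflexivity.
setoid_rewrite eqv_mul1l. symmetry; exact: eqv_mul1r.
Qed.

Lemma stepm_sound m : interp (stepm m) ~~ mterm m.
Proof.
rewrite /stepm; case E: (stepw m.2) => [q|]; last exact: interp1.
setoid_rewrite interp_mulp. setoid_rewrite interp1. rewrite /mterm /=.
setoid_rewrite <- (stepw_sound E). apply: eqv_mul; last reflexivity.
exact: eqv_mul1r.
Qed.

Lemma stepp_sound p : interp (stepp p) ~~ interp p.
Proof.
rewrite /stepp; elim: p => [|m p IH] /=; first reflexivity.
setoid_rewrite interp_cat. setoid_rewrite IH. setoid_rewrite stepm_sound. reflexivity.
Qed.

Lemma reduce_sound n p : interp (reduce n p) ~~ interp p.
Proof.
elim: n p => [|n IH] p /=; first reflexivity.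
setoid_rewrite IH. setoid_rewrite interp_collect. exact: stepp_sound.
Qed.

Lemma red_check n u v : allzero (collect (reduce n (collect (norm (tsub u v))))) -> u ~~ v.
Proof.
move=> /allzero_sound H; apply: subZ.
transitivity (interp (norm (tsub u v))); first exact: norm_sound.
transitivity (interp (collect (norm (tsub u v)))); first by symmetry; exact: interp_collect.
transitivity (interp (reduce n (collect (norm (tsub u v))))); first by symmetry; exact: reduce_sound.
transitivity (interp (collect (reduce n (collect (norm (tsub u v)))))); first by symmetry; exact: interp_collect.
exact: H.
Qed.


Lemma part1 (c0 c1 c2 : R) (a : idx) :
  torsion h c0 c1 c2 a ~~ tscale (- (c1 + c2)) (Mul (rho h) (Xi a)).
Proof.
apply: (@red_check 6%N).
case: a;
cbv [allzero collect insert weq geq norm mulp flatten map cat foldr tsub tscale tzero rho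
     th1 xx th2 xi1 Defs.eta xi2 fst snd interp mterm wterm andb reduce stepp stepm stepw rule
     torsion Dconn Defs.pi dXi X Xi sgn hat]; solve_az.
Qed.


Definition phi3 (a b c : gen) : R :=
  match a, b, c with
  | Th1, Eta, Eta => -(h/2)
  | Th1, Xi2, Xi1 => -h
  | Th1, Xi2, Xi2 => 1
  | Xi1, Th1, Xi1 => h*h
  | Xi1, Th1, Xi2 => -h
  | Xi1, Xi1, Th1 => 2*h*h
  | Xi1, Xi2, Th1 => -h
  | Eta, Th1, Eta => h/2
  | Eta, Eta, Th1 => -(h/2)
  | Xi2, Th1, Xi1 => -h
  | Xi2, Th1, Xi2 => 1
  | Xi2, Xi1, Th1 => -(2*h)
  | Xi2, Xi2, Th1 => 1
  | _, _, _ => 0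
  end.
Definition phi (w : seq gen) : R :=
  match w with [:: a; b; c] => phi3 a b c | _ => 0 end.

Definition S (p : seq mono) (F : seq gen -> R) : R := \sum_(m <- p) m.1 * F m.2.
Definition G (u : T) (a b : seq gen) : R := S (norm u) (fun w => phi (a ++ w ++ b)).

Lemma S_foldr p F : S p F = foldr (fun m acc => m.1 * F m.2 + acc) 0 p.
Proof. elim: p => [|m p IH]; first by rewrite /S big_nil. by rewrite /S big_cons -/(S p F) IH. Qed.

Lemma S_cat p q F : S (p ++ q) F = S p F + S q F.
Proof. by rewrite /S big_cat. Qed.

Lemma S_mulp p q F : S (mulp p q) F = \sum_(m <- p) m.1 * S q (fun w => F (m.2 ++ w)).
Proof.
rewrite /S /mulp big_flatten big_map /=; apply: eq_bigr => m _.
rewrite big_map mulr_sumr; apply: eq_bigr => n _ /=; by rewrite mulrA.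
Qed.

Lemma S_mulp2 p q F : S (mulp p q) F = \sum_(n <- q) n.1 * S p (fun v => F (v ++ n.2)).
Proof.
rewrite S_mulp /S.
under eq_bigr do rewrite mulr_sumr.
rewrite exchange_big /=; apply: eq_bigr => n _.
rewrite mulr_sumr; apply: eq_bigr => m _; by rewrite mulrCA.
Qed.

Lemma GM1 u v a b : G (Mul u v) a b = \sum_(m <- norm u) m.1 * G v (a ++ m.2) b.
Proof.
rewrite /G /= S_mulp; apply: eq_bigr => m _; congr (_ * _).
by apply: eq_bigr => n _; rewrite -!catA.
Qed.

Lemma GM2 u v a b : G (Mul u v) a b = \sum_(n <- norm v) n.1 * G u a (n.2 ++ b).
Proof.
rewrite /G /= S_mulp2; apply: eq_bigr => n _; congr (_ * _).
by apply: eq_bigr => m _; rewrite -!catA.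
Qed.

Lemma GA u v a b : G (Add u v) a b = G u a b + G v a b.
Proof. by rewrite /G /= S_cat. Qed.

Lemma GC r u a b : G (Mul (Cst r) u) a b = r * G u a b.
Proof. by rewrite GM1 /= big_cons big_nil addr0 cats0. Qed.

Lemma GCr r u a b : G (Mul u (Cst r)) a b = r * G u a b.
Proof. by rewrite GM2 /= big_cons big_nil addr0. Qed.

Lemma GZ a b : G Z a b = 0.
Proof. by rewrite /G /S /= big_cons big_nil mul0r addr0. Qed.

Lemma GCst r a b : G (Cst r) a b = r * phi (a ++ b).
Proof. by rewrite /G /S /= big_cons big_nil addr0. Qed.

Definition hom2 (p : seq mono) : Prop := foldr (fun m P => (size m.2 = 2%N \/ m.1 = 0) /\ P) True p.

Lemma phi_size w : size w != 3%N -> phi w = 0.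
Proof. by case: w => [|? [|? [|? [|? ?]]]]. Qed.

Lemma G_hom u a b : hom2 (norm u) -> (size a + size b != 1)%N -> G u a b = 0.
Proof.
move=> H Hs; rewrite /G S_foldr; elim: (norm u) H => [|m p IH] //= [Hm /IH ->].
case: Hm => [Hm|->]; last by rewrite mul0r addr0.
rewrite phi_size ?mulr0 ?addr0 // !size_cat Hm.
apply: contra Hs => /eqP E; apply/eqP; move: E; rewrite addnCA. 
by move/(congr1 (fun k => k - 2)%N) => /=; rewrite addKn.
Qed.

Lemma rel_case L Rr : hom2 (norm L) -> hom2 (norm Rr) ->
  (forall g, G L [:: g] [::] = G Rr [:: g] [::]) ->
  (forall g, G L [::] [:: g] = G Rr [::] [:: g]) ->
  forall a b, G L a b = G Rr a b.
Proof.
move=> HL HR H1 H2 a b.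
have [Hs|Hs] := eqVneq (size a + size b)%N 1%N; last by rewrite !G_hom.
case: a Hs => [|g [|g' a]] /=.
- case: b => [|g [|g' b]] //= _; exact: H2.
- by case: b => [|g' b] //= _; exact: H1.
- by rewrite addSn addSn.
Qed.


Ltac gcomp := rewrite /G !S_foldr;
  cbv [foldr norm mulp flatten map cat tsub tscale tzero rho th1 xx th2 xi1 Defs.eta xi2
       fst snd phi phi3 Xi].

Ltac hom_tac := cbv [hom2 foldr norm mulp flatten map cat tsub tscale tzero rho th1 xx th2 xi1 Defs.eta xi2
       fst snd size];
  repeat match goal with
         | |- _ /\ _ => split
         | |- True => exact I
         | |- _ \/ _ => first [left; reflexivity | right; reflexivity]
         end.

Lemma rel_inv l r : inrel (l, r) (relations h) -> forall a b, G l a b = G r a b.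
Proof.
move=> Hin; cbv [inrel relations] in Hin.
repeat match goal with
| H : _ \/ _ |- _ => destruct H as [H|H]
| H : False |- _ => destruct H
| H : (_, _) = (_, _) |- _ => injection H as -> ->
end.
all: apply: rel_case; [hom_tac | hom_tac | move=> g; case: g; gcomp; field; try done
  | move=> g; case: g; gcomp; field; try done].
Qed.

Lemma G_inv u v : u ~~ v -> forall a b, G u a b = G v a b.
Proof.
elim => {u v}.
- by [].
- by move=> u v _ IH a b; rewrite IH.
- by move=> u v w _ IH1 _ IH2 a b; rewrite IH1 IH2.
- by move=> u u' v v' _ IH1 _ IH2 a b; rewrite !GA IH1 IH2.
- move=> u u' v v' _ IH1 _ IH2 a b.
  rewrite GM2. under eq_bigr do rewrite IH1. rewrite -GM2 GM1.
  under eq_bigr do rewrite IH2. by rewrite -GM1.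
- by move=> u v w a b; rewrite !GA addrA.
- by move=> u v a b; rewrite !GA addrC.
- by move=> u a b; rewrite GA GZ add0r.
- by move=> u a b; rewrite GA /tscale GC GZ mulN1r addrN.
- move=> u v w a b. rewrite GM1 [RHS]GM1.
  have -> : \sum_(k <- norm (Mul u v)) k.1 * G w (a ++ k.2) b =
            S (mulp (norm u) (norm v)) (fun x => G w (a ++ x) b) by [].
  rewrite S_mulp; apply: eq_bigr => m _; congr (_ * _); rewrite GM1 /S; apply: eq_bigr => n _.
  by rewrite catA.
- by move=> u a b; rewrite GC mul1r.
- by move=> u a b; rewrite GCr mul1r.
- move=> u v w a b. rewrite GA !GM1 /= big_cat //.
- move=> u v w a b. rewrite GA !GM2 /= big_cat //.
- by move=> r1 r2 a b; rewrite GA !GCst mulrDl.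
- by move=> r1 r2 a b; rewrite GC !GCst mulrA.
- by move=> r u a b; rewrite GC GCr.
- move=> l r Hin a b; exact: rel_inv.
Qed.

End Free.

Theorem mainTheorem3 (R : realType) (h c0 c1 c2 : R) :
  (forall a : idx,
     eqv h (torsion h c0 c1 c2 a)
           (tscale (- (c1 + c2)) (Mul (rho h) (Xi a)))) /\
  (torsionless h c0 c1 c2 <-> c2 = - c1).
Proof.
split; first exact: part1.
split.
- move=> Ht.
  have E : eqv h (tscale (- (c1 + c2)) (Mul (rho h) (Xi I3))) (tzero R).
    apply: eqv_trans (Ht I3); apply: eqv_sym; exact: part1.
  have := G_inv E [::] [::].
  have HV : G h (Mul (rho h) (Xi I3)) [::] [::] = 1 by rewrite /G !S_foldr;
    cbv [foldr norm mulp flatten map cat tsub tscale tzero rho th1 xx th2 xi1 Defs.eta xi2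
       fst snd phi phi3 Xi]; field.
  rewrite /tscale GC GZ HV mulr1 => /eqP; rewrite oppr_eq0 addrC addr_eq0 => /eqP //.
- move=> -> a; apply: eqv_trans; first exact: part1.
  rewrite addrN oppr0 /tscale; exact: mul0.
Qed.
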